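(* Let $\pi:G\times X\to X$ be a continuous $\pi$-uniform action of a topological group $G$ on a Hausdorff non-archimedean uniform space $(X,\mu)$. Then there exist a Hausdorff non-archimedean Boolean topological group $E$, on which $G$ acts continuously by group automorphisms, and a $G$-equivariant map $\alpha:X\to E$ which is a uniform embedding of $(X,\mu)$ into $E$ equipped with its (right $=$ left) group uniformity, such that $\alpha(X)$ is closed in $E$.
   Context: A uniform space $(X,\mu)$ is non-archimedean if $\mu$ has a base consisting of entourages which are equivalence relations. An action $\pi:G\times X\to X$ on a uniform space is $\pi$-uniform if for every entourage $\varepsilon\in\mu$ and $g_0\in G$ there exist $\delta\in\mu$ and a neighborhood $O$ of $g_0$ such that $(gx,gy)\in\varepsilon$ for all $(x,y)\in\delta$ and $g\in O$. A Boolean group is an abelian group with $x+x=0$ for all $x$; a topological group is non-archimedean if it has a local base at the identity consisting of open subgroups. A uniform embedding is an injective map which is a uniform isomorphism onto its image. *)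

(* Defs.v *)
From Stdlib Require Import Classical.

Set Implicit Arguments.

Definition is_topology (X : Type) (open : (X -> Prop) -> Prop) : Prop :=
  open (fun _ => True) /\
  (forall A B, open A -> open B -> open (fun x => A x /\ B x)) /\
  (forall F : (X -> Prop) -> Prop, (forall A, F A -> open A) ->
     open (fun x => exists A, F A /\ A x)).

Definition nbhd_top (X : Type) (open : (X -> Prop) -> Prop) (x : X) (A : X -> Prop) : Prop :=
  exists O, open O /\ O x /\ forall y, O y -> A y.

Definition hausdorff_top (X : Type) (open : (X -> Prop) -> Prop) : Prop :=
  forall x y : X, x <> y -> exists U V, open U /\ open V /\ U x /\ V y /\
    forall z, ~ (U z /\ V z).

Definition closed_top (X : Type) (open : (X -> Prop) -> Prop) (C : X -> Prop) : Prop :=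
  open (fun x => ~ C x).

Definition is_uniformity (X : Type) (ent : (X -> X -> Prop) -> Prop) : Prop :=
  ent (fun _ _ => True) /\
  (forall U V, ent U -> (forall x y, U x y -> V x y) -> ent V) /\
  (forall U V, ent U -> ent V -> ent (fun x y => U x y /\ V x y)) /\
  (forall U, ent U -> forall x, U x x) /\
  (forall U, ent U -> ent (fun x y => U y x)) /\
  (forall U, ent U -> exists V, ent V /\ forall x y z, V x y -> V y z -> U x z).

Definition nbhd_unif (X : Type) (ent : (X -> X -> Prop) -> Prop) (x : X) (A : X -> Prop) : Prop :=
  exists U, ent U /\ forall y, U x y -> A y.

Definition hausdorff_unif (X : Type) (ent : (X -> X -> Prop) -> Prop) : Prop :=
  forall x y : X, (forall U, ent U -> U x y) -> x = y.

Definition equiv_rel (X : Type) (R : X -> X -> Prop) : Prop :=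
  (forall x, R x x) /\ (forall x y, R x y -> R y x) /\
  (forall x y z, R x y -> R y z -> R x z).

Definition non_archimedean_unif (X : Type) (ent : (X -> X -> Prop) -> Prop) : Prop :=
  forall U, ent U -> exists V, ent V /\ equiv_rel V /\ forall x y, V x y -> U x y.

Definition uniform_embedding (X Y : Type) (entX : (X -> X -> Prop) -> Prop)
    (entY : (Y -> Y -> Prop) -> Prop) (f : X -> Y) : Prop :=
  (forall x y, f x = f y -> x = y) /\
  (forall V, entY V -> exists U, entX U /\ forall x y, U x y -> V (f x) (f y)) /\
  (forall U, entX U -> exists V, entY V /\ forall x y, V (f x) (f y) -> U x y).

Definition continuous2 (A B C : Type) (NA : A -> (A -> Prop) -> Prop)
    (NB : B -> (B -> Prop) -> Prop) (NC : C -> (C -> Prop) -> Prop)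
    (f : A -> B -> C) : Prop :=
  forall a b W, NC (f a b) W ->
    exists U V, NA a U /\ NB b V /\ forall a' b', U a' -> V b' -> W (f a' b').

Definition continuous1 (A C : Type) (NA : A -> (A -> Prop) -> Prop)
    (NC : C -> (C -> Prop) -> Prop) (f : A -> C) : Prop :=
  forall a W, NC (f a) W -> exists U, NA a U /\ forall a', U a' -> W (f a').

Definition is_group (G : Type) (mul : G -> G -> G) (one : G) (inv : G -> G) : Prop :=
  (forall x y z, mul x (mul y z) = mul (mul x y) z) /\
  (forall x, mul one x = x) /\ (forall x, mul x one = x) /\
  (forall x, mul (inv x) x = one) /\ (forall x, mul x (inv x) = one).

Definition topological_group (G : Type) (mul : G -> G -> G) (one : G) (inv : G -> G)
    (open : (G -> Prop) -> Prop) : Prop :=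
  is_group mul one inv /\ is_topology open /\
  continuous2 (nbhd_top open) (nbhd_top open) (nbhd_top open) mul /\
  continuous1 (nbhd_top open) (nbhd_top open) inv.

(* Boolean group: abelian with x + x = 0 (so the inverse is the identity) *)
Definition boolean_group (E : Type) (add : E -> E -> E) (zero : E) : Prop :=
  is_group add zero (fun x => x) /\ (forall x y, add x y = add y x).

Definition non_archimedean_topgroup (G : Type) (mul : G -> G -> G) (one : G) (inv : G -> G)
    (open : (G -> Prop) -> Prop) : Prop :=
  forall A, nbhd_top open one A ->
    exists H : G -> Prop, open H /\ H one /\
      (forall x y, H x -> H y -> H (mul x y)) /\ (forall x, H x -> H (inv x)) /\
      (forall x, H x -> A x).

Definition group_uniformity (G : Type) (mul : G -> G -> G) (one : G) (inv : G -> G)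
    (open : (G -> Prop) -> Prop) (W : G -> G -> Prop) : Prop :=
  exists A, nbhd_top open one A /\ forall a b, A (mul (inv a) b) -> W a b.

Definition is_action (G X : Type) (mul : G -> G -> G) (one : G) (pi : G -> X -> X) : Prop :=
  (forall x, pi one x = x) /\ (forall g h x, pi (mul g h) x = pi g (pi h x)).

Definition pi_uniform (G X : Type) (openG : (G -> Prop) -> Prop)
    (ent : (X -> X -> Prop) -> Prop) (pi : G -> X -> X) : Prop :=
  forall eps, ent eps -> forall g0 : G,
    exists delta O, ent delta /\ nbhd_top openG g0 O /\
      forall g x y, O g -> delta x y -> eps (pi g x) (pi g y).

(* Main.v *)
Require Import Defs.
From Stdlib Require Import Classical ClassicalEpsilon FunctionalExtensionality List.

Section Constr.
Variable X : Type.
Variable ent : (X -> X -> Prop) -> Prop.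
Hypothesis Hunif : is_uniformity ent.
Hypothesis Hhaus : hausdorff_unif ent.
Hypothesis Hna : non_archimedean_unif ent.
Variable G : Type.
Variable mul : G -> G -> G.
Variable one : G.
Variable openG : (G -> Prop) -> Prop.
Hypothesis HtopG : is_topology openG.
Variable pi : G -> X -> X.
Hypothesis Hact : is_action mul one pi.
Hypothesis Hcont : continuous2 (nbhd_top openG) (nbhd_unif ent) (nbhd_unif ent) pi.
Hypothesis Hpu : pi_uniform openG ent pi.

Lemma ent_true : ent (fun _ _ => True). Proof. destruct Hunif as [h _]; exact h. Qed.
Lemma ent_int U V : ent U -> ent V -> ent (fun x y => U x y /\ V x y).
Proof. destruct Hunif as [_ [_ [h _]]]; auto. Qed.
Lemma ent_refl U : ent U -> forall x, U x x.
Proof. destruct Hunif as [_ [_ [_ [h _]]]]; intros hU x; exact (h U hU x). Qed.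
Lemma ent_sym U : ent U -> ent (fun x y => U y x).
Proof. destruct Hunif as [_ [_ [_ [_ [h _]]]]]; intros hU; exact (h U hU). Qed.
Lemma ent_symm U : ent U -> ent (fun x y => U x y /\ U y x).
Proof. intros; apply ent_int; auto; apply ent_sym; auto. Qed.

Definition sat (V : X -> X -> Prop) (S : X -> Prop) := forall x y, V x y -> S x -> S y.
Definition I := {S : X -> Prop | exists V, ent V /\ sat V S}.
Definition R := I -> bool.
Definition dec (P : Prop) : bool := if excluded_middle_informative P then true else false.
Definition addR (f g : R) : R := fun S => xorb (f S) (g S).
Definition zeroR : R := fun _ => false.
Definition alphaR (x : X) : R := fun S => dec (proj1_sig S x).
Fixpoint sumR (l : list X) : R :=
  match l with nil => zeroR | x :: l => addR (alphaR x) (sumR l) end.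
Definition Hs (V : X -> X -> Prop) (f : R) := forall S : I, sat V (proj1_sig S) -> f S = false.
Definition fin (f : R) := exists l, f = sumR l.
Definition E := {f : R | fin f}.

Lemma dec_true (P : Prop) : P -> dec P = true.
Proof. unfold dec; destruct (excluded_middle_informative P); tauto. Qed.
Lemma dec_false (P : Prop) : ~ P -> dec P = false.
Proof. unfold dec; destruct (excluded_middle_informative P); tauto. Qed.
Lemma dec_iff (P Q : Prop) : (P <-> Q) -> dec P = dec Q.
Proof. unfold dec; destruct (excluded_middle_informative P), (excluded_middle_informative Q); tauto. Qed.
Lemma dec_eq_true (P : Prop) : dec P = true -> P.
Proof. unfold dec; destruct (excluded_middle_informative P); auto; discriminate. Qed.

Ltac bsolve := apply functional_extensionality; let s := fresh "s" in intro s; unfold addR, zeroR; cbv beta;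
  repeat match goal with |- context [?f s] => is_var f; destruct (f s) end; reflexivity.

Lemma addR_comm f g : addR f g = addR g f. Proof. bsolve. Qed.
Lemma addR_assoc f g h : addR f (addR g h) = addR (addR f g) h. Proof. bsolve. Qed.
Lemma addR_0l f : addR zeroR f = f. Proof. bsolve. Qed.
Lemma addR_0r f : addR f zeroR = f. Proof. bsolve. Qed.
Lemma addR_self f : addR f f = zeroR. Proof. bsolve. Qed.
Lemma addR_chain c b a : addR c a = addR (addR c b) (addR b a). Proof. bsolve. Qed.
Lemma addR_swap4 a b c d : addR (addR a b) (addR c d) = addR (addR a c) (addR b d). Proof. bsolve. Qed.
Lemma addR_lcomm a b c : addR a (addR b c) = addR b (addR a c). Proof. bsolve. Qed.

Lemma Eeq (a b : E) : proj1_sig a = proj1_sig b -> a = b.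
Proof. destruct a, b; simpl; intros ->; f_equal; apply proof_irrelevance. Qed.
Lemma Ieq (a b : I) : proj1_sig a = proj1_sig b -> a = b.
Proof. destruct a, b; simpl; intros ->; f_equal; apply proof_irrelevance. Qed.

Lemma sumR_app l1 l2 : sumR (l1 ++ l2) = addR (sumR l1) (sumR l2).
Proof. induction l1 as [|x l IH]; simpl. now rewrite addR_0l. rewrite IH; apply addR_assoc. Qed.
Lemma sumR_mid l1 x l2 : sumR (l1 ++ x :: l2) = addR (alphaR x) (sumR (l1 ++ l2)).
Proof. rewrite !sumR_app; simpl; apply addR_lcomm. Qed.

Lemma fin_add f g : fin f -> fin g -> fin (addR f g).
Proof. intros [l1 ->] [l2 ->]; exists (l1 ++ l2); now rewrite sumR_app. Qed.

Lemma pre_ok g (S : I) : exists V, ent V /\ sat V (fun z => proj1_sig S (pi g z)).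
Proof.
  destruct S as [S [V [hV hs]]]; simpl.
  destruct (Hpu V hV g) as [d [O [hd [[O' [_ [hO'g hO']]] h]]]].
  exists d; split; auto. intros x y dxy Sx. exact (hs _ _ (h g x y (hO' _ hO'g) dxy) Sx).
Qed.
Definition pre g (S : I) : I := exist _ (fun z => proj1_sig S (pi g z)) (pre_ok g S).
Definition tauR g (f : R) : R := fun S => f (pre g S).

Lemma tauR_sum g l : tauR g (sumR l) = sumR (map (pi g) l).
Proof. induction l as [|x l IH]; simpl. reflexivity. rewrite <- IH; reflexivity. Qed.
Lemma fin_tau g f : fin f -> fin (tauR g f).
Proof. intros [l ->]; exists (map (pi g) l); apply tauR_sum. Qed.
Lemma fin_alpha x : fin (alphaR x).
Proof. exists (x :: nil); simpl; now rewrite addR_0r. Qed.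
Lemma fin_zero : fin zeroR. Proof. exists nil; reflexivity. Qed.

Definition addE (a b : E) : E := exist _ (addR (proj1_sig a) (proj1_sig b)) (fin_add _ _ (proj2_sig a) (proj2_sig b)).
Definition zeroE : E := exist _ zeroR fin_zero.
Definition tauE g (a : E) : E := exist _ (tauR g (proj1_sig a)) (fin_tau g _ (proj2_sig a)).
Definition alphaE x : E := exist _ (alphaR x) (fin_alpha x).
Definition coset (a : E) V := fun b : E => Hs V (addR (proj1_sig b) (proj1_sig a)).
Definition openE (O : E -> Prop) := forall a, O a -> exists V, ent V /\ forall b, coset a V b -> O b.

Lemma H_mono V V' f : (forall x y, V x y -> V' x y) -> Hs V f -> Hs V' f.
Proof. intros hv h S s; apply h; intros x y v; apply s; auto. Qed.
Lemma H_zero V : Hs V zeroR. Proof. intros S _; reflexivity. Qed.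
Lemma H_add V f g : Hs V f -> Hs V g -> Hs V (addR f g).
Proof. intros h1 h2 S s; unfold addR; rewrite (h1 S s), (h2 S s); reflexivity. Qed.
Lemma H_self V f : Hs V (addR f f). Proof. rewrite addR_self; apply H_zero. Qed.

Lemma coset_open a V : ent V -> openE (coset a V).
Proof.
  intros hV b hb; exists V; split; auto; intros c hc; unfold coset in *.
  rewrite (addR_chain _ (proj1_sig b)); apply H_add; auto.
Qed.

Lemma nbhdE a A : nbhd_top openE a A <-> exists V, ent V /\ forall b, coset a V b -> A b.
Proof.
  split.
  - intros [O [hO [ha h]]]. destruct (hO a ha) as [V [hV h']]. exists V; auto.
  - intros [V [hV h]]. exists (coset a V). split; [apply coset_open; auto|]. split; auto. apply H_self.
Qed.

Lemma nbhdG_int g A B : nbhd_top openG g A -> nbhd_top openG g B -> nbhd_top openG g (fun x => A x /\ B x).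
Proof.
  intros [O1 [o1 [a1 b1]]] [O2 [o2 [a2 b2]]]. exists (fun x => O1 x /\ O2 x).
  destruct HtopG as [_ [hi _]]. split; [apply hi; auto|]. split; [auto|]. intros y [? ?]; auto.
Qed.
Lemma nbhdG_full g : nbhd_top openG g (fun _ => True).
Proof. exists (fun _ => True); destruct HtopG as [ht _]; auto. Qed.

Lemma orbit_cont V (hV : ent V) g l : exists O, nbhd_top openG g O /\
  forall g', O g' -> Hs V (addR (sumR (map (pi g') l)) (sumR (map (pi g) l))).
Proof.
  induction l as [|x l IH].
  - exists (fun _ => True); split; [apply nbhdG_full|]. intros; simpl. apply H_self.
  - destruct IH as [O1 [hO1 h1]].
    destruct (Hcont g x (fun y => V (pi g x) y /\ V y (pi g x))) as [U0 [V0 [hU0 [hV0 h]]]].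
    { exists (fun a b => V a b /\ V b a); split; [apply ent_symm; auto|]. intros y [? ?]; split; auto. }
    exists (fun g' => O1 g' /\ U0 g'). split; [apply nbhdG_int; auto|].
    intros g' [o1 u0]. simpl. rewrite addR_swap4. apply H_add; auto.
    assert (hx : V0 x). { destruct hV0 as [W [hW hW']]. apply hW'. apply ent_refl; auto. }
    destruct (h g' x u0 hx) as [w1 w2].
    intros S sS. unfold addR, alphaR. rewrite (dec_iff (proj1_sig S (pi g' x)) (proj1_sig S (pi g x))).
    + apply Bool.xorb_nilpotent.
    + split; intro; eapply sS; eauto.
Qed.

Lemma E_group : boolean_group addE zeroE.
Proof.
  split; [split|]; [| split; [| split; [| split]] |]; intros; apply Eeq; simpl.
  - apply addR_assoc. - apply addR_0l. - apply addR_0r. - apply addR_self. - apply addR_self.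
  - apply addR_comm.
Qed.

Lemma E_top : is_topology openE.
Proof.
  split; [| split].
  - intros a _. exists (fun _ _ => True). split; [apply ent_true| auto].
  - intros A B hA hB a [ha hb]. destruct (hA a ha) as [V1 [e1 h1]], (hB a hb) as [V2 [e2 h2]].
    exists (fun x y => V1 x y /\ V2 x y). split; [apply ent_int; auto|].
    intros b hb'. split; [apply h1 | apply h2]; unfold coset in *; eapply H_mono; try exact hb'; simpl; tauto.
  - intros F hF a [A [hFA hAa]]. destruct (hF A hFA a hAa) as [V [e h]]. exists V; split; auto.
    intros b hb; exists A; auto.
Qed.

Lemma E_topgroup : topological_group addE zeroE (fun a => a) openE.
Proof.
  split; [apply E_group|]. split; [apply E_top|]. split.
  - intros a b W hW. apply nbhdE in hW. destruct hW as [V [hV hW]].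
    exists (coset a V), (coset b V). split; [apply nbhdE; exists V; split; auto|].
    split; [apply nbhdE; exists V; split; auto|].
    intros a' b' ha hb. apply hW. unfold coset in *; simpl. rewrite addR_swap4. apply H_add; auto.
  - intros a W hW. exists W; split; auto.
Qed.

Lemma E_haus : hausdorff_top openE.
Proof.
  intros a b hab.
  assert (hex : exists S, proj1_sig a S <> proj1_sig b S).
  { apply not_all_ex_not. intro hall. apply hab. apply Eeq. apply functional_extensionality; exact hall. }
  destruct hex as [S hS]. destruct (proj2_sig S) as [V [hV sV]].
  exists (coset a V), (coset b V). split; [apply coset_open; auto|]. split; [apply coset_open; auto|].
  split; [apply H_self|]. split; [apply H_self|]. intros z [hz1 hz2]. apply hS.
  pose proof (hz1 S sV) as e1. pose proof (hz2 S sV) as e2. unfold addR in *.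
  destruct (proj1_sig z S), (proj1_sig a S), (proj1_sig b S); simpl in *; congruence.
Qed.

Lemma E_na : non_archimedean_topgroup addE zeroE (fun a => a) openE.
Proof.
  intros A hA. apply nbhdE in hA. destruct hA as [V [hV hA]].
  exists (fun b => Hs V (proj1_sig b)). split.
  - intros b hb; exists V; split; auto; intros c hc. unfold coset in hc.
    replace (proj1_sig c) with (addR (addR (proj1_sig c) (proj1_sig b)) (proj1_sig b))
      by (rewrite <- addR_assoc, addR_self, addR_0r; reflexivity). apply H_add; auto.
  - split; [apply H_zero|]. split; [intros; simpl; apply H_add; auto|]. split; [auto|].
    intros x hx; apply hA; unfold coset; simpl; rewrite addR_0r; auto.
Qed.

Lemma tau_action : is_action mul one tauE.
Proof.
  destruct Hact as [h1 h2]. split.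
  - intros a. apply Eeq; simpl. unfold tauR. apply functional_extensionality; intro S. f_equal.
    apply Ieq. simpl. apply functional_extensionality; intro z. rewrite h1; reflexivity.
  - intros g h a. apply Eeq; simpl. unfold tauR. apply functional_extensionality; intro S. f_equal.
    apply Ieq. simpl. apply functional_extensionality; intro z. rewrite h2; reflexivity.
Qed.

Lemma tau_add g a b : tauE g (addE a b) = addE (tauE g a) (tauE g b).
Proof. apply Eeq; reflexivity. Qed.

Lemma H_tau d V g' f : (forall x y, d x y -> V (pi g' x) (pi g' y)) -> Hs d f -> Hs V (tauR g' f).
Proof. intros hu hf S sS. unfold tauR. apply hf. simpl. intros x y dxy Sx. exact (sS _ _ (hu x y dxy) Sx). Qed.

Lemma tau_cont : continuous2 (nbhd_top openG) (nbhd_top openE) (nbhd_top openE) tauE.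
Proof.
  intros g a W hW. apply nbhdE in hW. destruct hW as [V [hV hW]].
  destruct (Hpu V hV g) as [d [O1 [hd [hO1 hu]]]].
  destruct (proj2_sig a) as [l hl].
  destruct (orbit_cont V hV g l) as [O2 [hO2 ho]].
  exists (fun g' => O1 g' /\ O2 g'), (coset a d).
  split; [apply nbhdG_int; auto|]. split; [apply nbhdE; exists d; split; auto|].
  intros g' b [h1 h2] hb. apply hW. unfold coset in *; simpl.
  rewrite (addR_chain _ (tauR g' (proj1_sig a))). apply H_add.
  - change (addR (tauR g' (proj1_sig b)) (tauR g' (proj1_sig a))) with (tauR g' (addR (proj1_sig b) (proj1_sig a))).
    apply (H_tau d); auto.
  - rewrite hl, !tauR_sum. apply ho; auto.
Qed.

Lemma alpha_equiv g x : alphaE (pi g x) = tauE g (alphaE x).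
Proof. apply Eeq; reflexivity. Qed.

Lemma class_ok V x : ent V -> equiv_rel V -> exists W, ent W /\ sat W (fun z => V x z).
Proof. intros hV [r [s t]]. exists V; split; auto. intros a b vab vxa. exact (t _ _ _ vxa vab). Qed.
Definition cls V hV heq x : I := exist _ (fun z => V x z) (class_ok V x hV heq).

Lemma H_cls V hV heq x y f : Hs V (addR (alphaR x) f) -> f (cls V hV heq y) = true -> V y x.
Proof.
  intros h hf. assert (s : sat V (proj1_sig (cls V hV heq y))).
  { destruct heq as [r [s t]]. intros a b vab vxa. exact (t _ _ _ vxa vab). }
  specialize (h _ s). unfold addR in h. rewrite hf in h. unfold alphaR in h. simpl in h.
  destruct (dec (V y x)) eqn:e; [exact (dec_eq_true _ e)|discriminate].
Qed.

Lemma alpha_unif : uniform_embedding ent (group_uniformity addE zeroE (fun a => a) openE) alphaE.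
Proof.
  split; [|split].
  - intros x y hxy. apply Hhaus. intros U hU. destruct (Hna U hU) as [V [hV [heq hVU]]]. apply hVU.
    assert (e : alphaR x = alphaR y) by (apply (f_equal (@proj1_sig _ _)) in hxy; exact hxy).
    apply (H_cls V hV heq y x (alphaR x)).
    + rewrite <- e. apply H_self.
    + unfold alphaR. simpl. apply dec_true. destruct heq as [r _]; apply r.
  - intros W [A [hA hW]]. apply nbhdE in hA. destruct hA as [V [hV hA]].
    exists (fun x y => V x y /\ V y x). split; [apply ent_symm; auto|]. intros x y [v1 v2].
    apply hW. apply hA. unfold coset; simpl. rewrite addR_0r. intros S sS. unfold addR, alphaR.
    rewrite (dec_iff (proj1_sig S x) (proj1_sig S y)).
    + apply Bool.xorb_nilpotent.
    + split; intro; eapply sS; eauto.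
  - intros U hU. destruct (Hna U hU) as [V [hV [heq hVU]]].
    exists (fun a b => Hs V (addR (proj1_sig a) (proj1_sig b))). split.
    + exists (fun c => Hs V (proj1_sig c)). split; [|intros a b h; exact h].
      apply nbhdE. exists V; split; auto. intros b hb; unfold coset in hb; simpl in hb; rewrite addR_0r in hb; exact hb.
    + intros x y h. apply hVU. simpl in h. apply (H_cls V hV heq y x (alphaR x)).
      * rewrite addR_comm. exact h.
      * unfold alphaR. simpl. apply dec_true. destruct heq as [r _]; apply r.
Qed.

Lemma reduce l : exists l', NoDup l' /\ sumR l = sumR l'.
Proof.
  induction l as [|x l IH].
  - exists nil; split; [constructor|reflexivity].
  - destruct IH as [l' [nd e]]. simpl. rewrite e. destruct (classic (In x l')) as [hin|hnin].
    + destruct (in_split x l' hin) as [l1 [l2 ->]]. exists (l1 ++ l2).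
      split; [eapply NoDup_remove_1; eauto|]. rewrite sumR_mid, addR_assoc, addR_self, addR_0l. reflexivity.
    + exists (x :: l'). split; [constructor; auto|reflexivity].
Qed.

Lemma sep_one x l : exists U, ent U /\ forall y, In y l -> U x y -> x = y.
Proof.
  induction l as [|y l IH].
  - exists (fun _ _ => True); split; [apply ent_true| intros y []].
  - destruct IH as [U [hU h]]. destruct (classic (x = y)) as [e|ne].
    + exists U; split; auto. intros z [<-|hz] hu; auto.
    + destruct (classic (exists U0, ent U0 /\ ~ U0 x y)) as [h0|h0].
      2:{ exfalso; apply ne; apply Hhaus; intros U0 hU0; apply NNPP; intro hn; apply h0; eauto. }
      destruct h0 as [U0 [hU0 hn]]. exists (fun a b => U a b /\ U0 a b). split; [apply ent_int; auto|].
      intros z [<-|hz] [h1 h2]; [contradiction | apply h; auto].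
Qed.

Lemma sep l : exists V, ent V /\ equiv_rel V /\ forall y y', In y l -> In y' l -> V y y' -> y = y'.
Proof.
  induction l as [|x l IH].
  - exists (fun _ _ => True). split; [apply ent_true|]. split; [split; [auto|split; auto]|]. intros y y' [].
  - destruct IH as [V0 [h0 [_ s0]]]. destruct (sep_one x l) as [U [hU sU]].
    assert (hW : ent (fun a b => (V0 a b /\ U a b) /\ U b a)).
    { apply ent_int; [apply ent_int; auto| apply ent_sym; auto]. }
    destruct (Hna _ hW) as [V [hV [heq hVW]]]. exists V. split; auto. split; auto.
    intros y y' [<-|hy] [<-|hy'] v; try reflexivity; destruct (hVW _ _ v) as [[a b] c].
    + apply sU; auto.
    + symmetry; apply sU; auto.
    + apply s0; auto.
Qed.

Lemma sum_cls V hV heq y l : (forall z, In z l -> ~ V y z) -> sumR (y :: l) (cls V hV heq y) = true.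
Proof.
  intros h. simpl. unfold addR, alphaR. simpl. rewrite dec_true by (destruct heq as [r _]; apply r).
  assert (e : sumR l (cls V hV heq y) = false).
  { induction l as [|z l IH]; [reflexivity|]. simpl. unfold addR at 1. rewrite IH.
    - unfold alphaR; simpl. rewrite dec_false; auto. apply h; simpl; auto.
    - intros; apply h; simpl; auto. }
  rewrite e; reflexivity.
Qed.

Lemma alpha_closed : closed_top openE (fun e => exists x, alphaE x = e).
Proof.
  intros a ha. destruct (proj2_sig a) as [l0 hl0]. destruct (reduce l0) as [l [hnd hl]].
  rewrite hl in hl0. destruct l as [|y1 [|y2 rest]].
  - exists (fun _ _ => True). split; [apply ent_true|]. intros b hb [x hx]. subst b.
    pose (S := exist _ (fun _ => True) (ex_intro _ (fun _ _ => True) (conj ent_true (fun _ _ _ h => h))) : I).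
    specialize (hb S (fun _ _ _ h => h)). unfold coset in hb; simpl in hb. rewrite hl0 in hb.
    unfold addR, alphaR, zeroR in hb; simpl in hb. rewrite dec_true in hb; [discriminate | exact Logic.I].
  - exfalso. apply ha. exists y1. apply Eeq. simpl. rewrite hl0. simpl. rewrite addR_0r. reflexivity.
  - destruct (sep (y1 :: y2 :: rest)) as [V [hV [heq hs]]]. exists V. split; auto.
    intros b hb [x hx]. subst b. unfold coset in hb; simpl in hb. rewrite hl0 in hb.
    inversion hnd as [|? ? hn1 hnd2]; subst. inversion hnd2 as [|? ? hn2 _]; subst.
    assert (v1 : V y1 x).
    { apply (H_cls V hV heq x y1 _ hb). apply sum_cls. intros z hz vz.
      assert (y1 = z) by (apply hs; simpl; auto). subst; auto. }
    assert (v2 : V y2 x).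
    { apply (H_cls V hV heq x y2 _ hb).
      change (sumR (y1 :: y2 :: rest)) with (addR (alphaR y1) (addR (alphaR y2) (sumR rest))).
      rewrite addR_lcomm. apply (sum_cls V hV heq y2 (y1 :: rest)). intros z hz vz.
      assert (y2 = z) by (apply hs; simpl in *; tauto). subst. simpl in hz. destruct hz; [|contradiction].
      subst; apply hn1; simpl; auto. }
    destruct heq as [r [s t]]. apply hn1. left. apply hs; simpl; auto. exact (t _ _ _ v2 (s _ _ v1)).
Qed.

End Constr.

Theorem theorem6p5
  (G : Type) (mul : G -> G -> G) (one : G) (inv : G -> G)
  (openG : (G -> Prop) -> Prop)
  (HG : topological_group mul one inv openG)
  (X : Type) (ent : (X -> X -> Prop) -> Prop)
  (Hunif : is_uniformity ent) (Hhaus : hausdorff_unif ent)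
  (Hna : non_archimedean_unif ent)
  (pi : G -> X -> X) (Hact : is_action mul one pi)
  (Hcont : continuous2 (nbhd_top openG) (nbhd_unif ent) (nbhd_unif ent) pi)
  (Hpu : pi_uniform openG ent pi) :
  exists (E : Type) (add : E -> E -> E) (zero : E) (openE : (E -> Prop) -> Prop),
    boolean_group add zero /\
    topological_group add zero (fun a => a) openE /\
    hausdorff_top openE /\
    non_archimedean_topgroup add zero (fun a => a) openE /\
    exists tau : G -> E -> E,
      is_action mul one tau /\
      (forall g a b, tau g (add a b) = add (tau g a) (tau g b)) /\
      continuous2 (nbhd_top openG) (nbhd_top openE) (nbhd_top openE) tau /\
      exists alpha : X -> E,
        (forall g x, alpha (pi g x) = tau g (alpha x)) /\
        uniform_embedding ent (group_uniformity add zero (fun a => a) openE) alpha /\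
        closed_top openE (fun e => exists x, alpha x = e).
Proof.
  destruct HG as [_ [HtopG _]].
  exists (E X ent), (addE X ent), (zeroE X ent), (openE X ent).
  split; [apply E_group|]. split; [apply E_topgroup; auto|]. split; [apply E_haus|].
  split; [apply E_na; auto|].
  exists (tauE X ent G openG pi Hpu). split; [apply tau_action; auto|]. split; [apply tau_add|].
  split; [apply tau_cont; auto|].
  exists (alphaE X ent). split; [apply alpha_equiv|]. split; [apply alpha_unif; auto|].
  apply alpha_closed; auto.
Qed.
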